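(* For every $h\in\mathbb{C}$ with $|h-1|<1$, there exists a cubic polynomial $p$ with three distinct (simple) roots which is not unicritical, such that $N_{h,p}$ is not convergent, i.e. the Fatou set of $N_{h,p}$ is not equal to the union of the basins of attraction of the roots of $p$.
   Context: For a complex polynomial $p$ and $h\in\mathbb{C}\setminus\{0\}$, the relaxed Newton map is $N_{h,p}(z)=z-h\,\frac{p(z)}{p'(z)}$, a rational map of the Riemann sphere whose finite fixed points are the roots of $p$; a simple root is a fixed point with multiplier $1-h$, attracting when $|h-1|<1$. The basin of an attracting fixed point $z_0$ is $\{z:\lim_{k\to\infty}N_{h,p}^k(z)=z_0\}$. A polynomial is unicritical if it has the form $(z-\alpha)^n+\beta$. A polynomial is generic if all its roots are simple. *)

(* Defs.v *)
From HB Require Import structures.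
From mathcomp Require Import all_boot all_order all_algebra.
From mathcomp Require Import complex.
From mathcomp Require Import reals.
Set Implicit Arguments. Unset Strict Implicit. Unset Printing Implicit Defensive.
Import Order.TTheory GRing.Theory Num.Theory.
Local Open Scope ring_scope.

Section Dyn.
Variable R : realType.
Local Notation C := R[i].

(* The Riemann sphere: [Some z] is the finite point z, [None] is infinity. *)
Definition sphere := option C.

Definition modc (z : C) : R := Num.sqrt (complex.Re z ^+ 2 + complex.Im z ^+ 2).

Definition chordal (u v : sphere) : R :=
  match u, v with
  | Some z, Some w =>
      2 * modc (z - w) / (Num.sqrt (1 + modc z ^+ 2) * Num.sqrt (1 + modc w ^+ 2))
  | Some z, None | None, Some z => 2 / Num.sqrt (1 + modc z ^+ 2)
  | None, None => 0
  end.

(* The relaxed Newton map N_{h,p}(z) = z - h p(z)/p'(z), extended to the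
   Riemann sphere: poles (zeros of p' that are not zeros of p) go to
   infinity, and infinity is fixed (valid for deg p >= 2 and h <> deg p). *)
Definition relaxed_newton (h : C) (p : {poly C}) (u : sphere) : sphere :=
  match u with
  | None => None
  | Some z =>
      if (p^`()).[z] == 0 then
        (if p.[z] == 0 then Some z else None)
      else Some (z - h * p.[z] / (p^`()).[z])
  end.

Definition equicontinuous_iterates_at (f : sphere -> sphere) (u : sphere) : Prop :=
  forall eps : R, 0 < eps -> exists2 delta : R, 0 < delta &
    forall (v : sphere) (n : nat), chordal u v < delta ->
      chordal (iter n f u) (iter n f v) < eps.

(* Fatou set: points having a neighbourhood on which the iterates form an
   equicontinuous (equivalently, by Arzela-Ascoli on the compact sphere,
   normal) family *)
Definition fatou_set (f : sphere -> sphere) (u : sphere) : Prop :=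
  exists2 r : R, 0 < r &
    forall v : sphere, chordal u v < r -> equicontinuous_iterates_at f v.

Definition basin (f : sphere -> sphere) (w : sphere) (u : sphere) : Prop :=
  forall eps : R, 0 < eps -> exists K : nat,
    forall k : nat, (K <= k)%N -> chordal (iter k f u) w < eps.

Definition generic_poly (p : {poly C}) : Prop :=
  forall z : C, root p z -> ~~ root p^`() z.

(* unicritical polynomial: (z - alpha)^n + beta, up to a nonzero constant
   factor (which does not change the Newton map) *)
Definition unicritical (p : {poly C}) : Prop :=
  exists (c alpha beta : C) (n : nat),
    c != 0 /\ p = c *: (('X - alpha%:P) ^+ n + beta%:P).

End Dyn.

(* Main.v *)
Require Import Defs.
From HB Require Import structures.
From mathcomp Require Import all_boot all_order all_algebra.
From mathcomp Require Import complex.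
From mathcomp Require Import reals.
From mathcomp Require Import ring lra.
Set Implicit Arguments. Unset Strict Implicit. Unset Printing Implicit Defensive.
Import Order.TTheory GRing.Theory Num.Theory.
Local Open Scope complex_scope.
Local Open Scope ring_scope.

Section Modc.
Variable R : realType.
Local Notation C := R[i].

Lemma modcE (z : C) : `|z| = (modc z)%:C.
Proof. by rewrite normc_def. Qed.

Lemma modc_ge0 (z : C) : 0 <= modc z.
Proof. by rewrite /modc sqrtr_ge0. Qed.

Lemma modcM (z w : C) : modc (z * w) = modc z * modc w.
Proof. by have := normrM z w; rewrite !modcE -rmorphM => /complexI. Qed.

Lemma modcD (z w : C) : modc (z + w) <= modc z + modc w.
Proof. by have := ler_normD z w; rewrite !modcE -rmorphD lecR. Qed.

Lemma modcN (z : C) : modc (- z) = modc z.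
Proof. by have := normrN z; rewrite !modcE => /complexI. Qed.

Lemma modcB (z w : C) : modc (z - w) = modc (w - z).
Proof. by rewrite -modcN opprB. Qed.

Lemma modc_eq0 (z : C) : (modc z == 0) = (z == 0).
Proof. by rewrite -(inj_eq (@complexI R)) -modcE normr_eq0. Qed.

Lemma modc_gt0 (z : C) : z != 0 -> 0 < modc z.
Proof. by move=> nz; rewrite lt_def modc_eq0 nz modc_ge0. Qed.

Lemma modc_real (x : R) : modc (x%:C) = `|x|.
Proof. by rewrite /modc /= expr0n /= addr0 sqrtr_sqr. Qed.

Lemma modc_nat n : modc (n%:R : C) = n%:R.
Proof. by rewrite -(rmorph_nat (real_complex R)) modc_real ger0_norm. Qed.

Lemma modcX (z : C) n : modc (z ^+ n) = modc z ^+ n.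
Proof. elim: n => [|n IH]; first by rewrite !expr0; exact: (modc_nat 1). by rewrite !exprS modcM IH. Qed.

Lemma modcV (z : C) : modc (z^-1) = (modc z)^-1.
Proof. case: (eqVneq z 0) => [->|nz]. by rewrite invr0 /modc /= !expr0n /= addr0 sqrtr0 invr0. have := normrV (x:=z); rewrite unitfE nz => /(_ isT). by rewrite !modcE -fmorphV => /complexI. Qed.

Lemma modcDr (z w : C) : modc z - modc w <= modc (z + w).
Proof. have := modcD (z + w) (- w); rewrite addrK modcN; lra. Qed.

Lemma modcBr (z w : C) : modc z - modc w <= modc (z - w).
Proof. by have := modcDr z (- w); rewrite modcN. Qed.
End Modc.
Section Chord.
Variable R : realType.
Local Notation C := R[i].

Lemma sq1_ge1 (m : R) : 1 <= Num.sqrt (1 + m ^+ 2).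
Proof. rewrite -{1}sqrtr1; apply: ler_wsqrtr; have := sqr_ge0 m; lra. Qed.

Lemma sq1_le (m : R) : 0 <= m -> Num.sqrt (1 + m ^+ 2) <= 1 + m.
Proof.
move=> m0; rewrite -[X in _ <= X]ger0_norm; last lra.
rewrite -sqrtr_sqr; apply: ler_wsqrtr; rewrite !expr2; nra.
Qed.

Lemma chordal_le (z w : C) : chordal (Some z) (Some w) <= 2 * modc (z - w).
Proof.
rewrite /=; set S1 := Num.sqrt _; set S2 := Num.sqrt _.
have h1 : 1 <= S1 by apply: sq1_ge1.
have h2 : 1 <= S2 by apply: sq1_ge1.
have m0 := modc_ge0 (z - w).
have h3 : 1 <= S1 * S2 by nra.
rewrite ler_pdivrMr; last lra.
set m := modc _ in m0 *; set P := S1 * S2 in h3 *. nra.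
Qed.

Lemma chordal_ge0 (u v : sphere R) : 0 <= chordal u v.
Proof.
case: u => [z|]; case: v => [w|] //=.
- apply: divr_ge0; first by have := modc_ge0 (z - w); lra.
  apply: mulr_ge0; exact: sqrtr_ge0.
- apply: divr_ge0 => //; exact: sqrtr_ge0.
- apply: divr_ge0 => //; exact: sqrtr_ge0.
Qed.

Lemma chordal_near (v : C) (u : sphere R) : modc v <= 1 ->
  chordal (Some v) u < 1/3 ->
  exists2 w, u = Some w & modc (v - w) <= 3 * chordal (Some v) u.
Proof.
move=> hv; case: u => [w|] /=; last first.
  have mv0 := modc_ge0 v.
  have := sq1_le mv0; have := sq1_ge1 (modc v); set S := Num.sqrt _ => S1 S2.
  rewrite ltr_pdivrMr; last lra. lra.
move=> hch; exists w => //.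
move: hch; set S1 := Num.sqrt (1 + _); set S2 := Num.sqrt (1 + _) => hch.
have mv0 := modc_ge0 v; have mw0 := modc_ge0 w.
have a1 : 1 <= S1 by apply: sq1_ge1.
have a2 : 1 <= S2 by apply: sq1_ge1.
have b1 : S1 <= 1 + modc v by apply: sq1_le.
have b2 : S2 <= 1 + modc w by apply: sq1_le.
have tri : modc w <= modc v + modc (v - w).
  by have := modcBr w v; rewrite modcB; lra.
set m := modc (v - w) in tri hch *.
have m0 : 0 <= m by apply: modc_ge0.
set ch := 2 * m / (S1 * S2) in hch *.
have P : 0 < S1 * S2 by nra.
have E : ch * (S1 * S2) = 2 * m by rewrite /ch mulrVK // unitfE gt_eqF.
have c0 : 0 <= ch by rewrite /ch; apply: divr_ge0; lra.
have SS : S1 * S2 <= 2 * (2 + m) by nra.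
have m1 : m < 1 by nra.
nra.
Qed.
End Chord.
Section Lip.
Variable R : realType.
Local Notation C := R[i].

Lemma poly_lip (F : {poly C}) (r : R) : 0 <= r -> exists M : R, 0 <= M /\
  forall z w : C, modc z <= r -> modc w <= r ->
    modc F.[z] <= M /\ modc (F.[z] - F.[w]) <= M * modc (z - w).
Proof.
move=> r0; elim/poly_ind: F => [|p c [M [M0 HM]]].
  exists 0; split => // z w _ _; rewrite !horner0 subr0 mul0r.
  by have := modc_eq0 (0 : C); rewrite eqxx => /eqP ->.
exists (M * r + M + modc c); split.
  have := modc_ge0 c; nra.
move=> z w hz hw; rewrite !hornerMXaddC.
have [Hz _] := HM z w hz hw; have [Hw Hzw] := HM w z hw hz.
have [_ Hd] := HM z w hz hw.
have mz := modc_ge0 z; have mw := modc_ge0 w; have mc := modc_ge0 c.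
have mpz := modc_ge0 p.[z]; have mpw := modc_ge0 p.[w].
have md := modc_ge0 (z - w); have mdp := modc_ge0 (p.[z] - p.[w]).
split.
  apply: le_trans (modcD _ _) _; rewrite modcM.
  have : modc p.[z] * modc z <= M * r by apply: ler_pM.
  nra.
have -> : p.[z] * z + c - (p.[w] * w + c) = (p.[z] - p.[w]) * z + p.[w] * (z - w) by ring.
apply: le_trans (modcD _ _) _; rewrite !modcM.
have e1 : modc (p.[z] - p.[w]) * modc z <= M * modc (z - w) * r by apply: ler_pM.
have e2 : modc p.[w] * modc (z - w) <= M * modc (z - w) by apply: ler_pM.
nra.
Qed.

Lemma newton_lip (h : C) (P Q : {poly C}) (c : C) : Q.[c] != 0 ->
  exists r L : R, [/\ 0 < r, 0 <= L &
   forall z w : C, modc (z - c) <= r -> modc (w - c) <= r ->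
     [/\ Q.[z] != 0, modc Q.[c] / 2 <= modc Q.[z] &
       modc ((z - h * P.[z] / Q.[z]) - (w - h * P.[w] / Q.[w])) <= L * modc (z - w)]].
Proof.
move=> Qc.
have mc := modc_ge0 c.
have [MP [MP0 HP]] := poly_lip P (r := modc c + 1) ltac:(lra).
have [MQ [MQ0 HQ]] := poly_lip Q (r := modc c + 1) ltac:(lra).
set q := modc Q.[c].
have q0 : 0 < q by apply: modc_gt0.
set M := MP + MQ + 1.
have M1 : 1 <= M by rewrite /M; lra.
set r := q / (2 * M * (1 + q)).
have den0 : 0 < 2 * M * (1 + q) by nra.
have r0 : 0 < r by apply: divr_gt0.
have rE : r * (2 * M * (1 + q)) = q by rewrite /r mulrVK // unitfE gt_eqF.
have r1 : r <= 1 by nra.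
have rq : M * r <= q / 2 by nra.
have ball : forall z, modc (z - c) <= r -> modc z <= modc c + 1.
  move=> z hz; have := modcD (z - c) c; rewrite subrK; lra.
have low : forall z, modc (z - c) <= r -> q / 2 <= modc Q.[z].
  move=> z hz; have [_ H] := HQ z c (ball z hz) ltac:(lra).
  have := modcBr Q.[c] Q.[z]; rewrite [modc (Q.[c] - _)]modcB.
  have : MQ * modc (z - c) <= M * r by apply: ler_pM; rewrite ?modc_ge0 // /M; lra.
  move=> a b; rewrite -/q in b; lra.
set L := 1 + modc h * (2 * MP * MQ) * (4 / q ^+ 2).
exists r, L; split => //.
  rewrite /L; apply: addr_ge0 => //; apply: mulr_ge0; [apply: mulr_ge0; [exact: modc_ge0| nra] | apply: divr_ge0 => //; nra].
move=> z w hz hw.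
have lz := low z hz; have lw := low w hw.
have Uz : Q.[z] != 0 by rewrite -modc_eq0; apply/eqP => e; rewrite e in lz; lra.
have Uw : Q.[w] != 0 by rewrite -modc_eq0; apply/eqP => e; rewrite e in lw; lra.
split => //.
have -> : (z - h * P.[z] / Q.[z]) - (w - h * P.[w] / Q.[w]) =
   (z - w) - h * (((P.[z] - P.[w]) * Q.[w] - P.[w] * (Q.[z] - Q.[w])) / (Q.[z] * Q.[w])).
  by field; apply/andP.
apply: le_trans (modcD _ _) _; rewrite modcN modcM [modc (_ / _)]modcM modcV modcM.
have [Pz Pd] := HP z w (ball z hz) (ball w hw).
have [Pw _] := HP w z (ball w hw) (ball z hz).
have [Qz Qd] := HQ z w (ball z hz) (ball w hw).
have [Qw _] := HQ w z (ball w hw) (ball z hz).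
set X := modc (_ - _ * _).
have XB : X <= 2 * MP * MQ * modc (z - w).
  rewrite /X; apply: le_trans (modcD _ _) _; rewrite modcN !modcM.
  have e1 : modc (P.[z] - P.[w]) * modc Q.[w] <= MP * modc (z - w) * MQ by apply: ler_pM; rewrite ?modc_ge0.
  have e2 : modc P.[w] * modc (Q.[z] - Q.[w]) <= MP * (MQ * modc (z - w)) by apply: ler_pM; rewrite ?modc_ge0.
  nra.
have X0 : 0 <= X by apply: modc_ge0.
set Y := modc Q.[z] * modc Q.[w].
have Y0 : q ^+ 2 / 4 <= Y by rewrite /Y; have := modc_ge0 Q.[z]; nra.
have q4 : 0 < q ^+ 2 / 4 by apply: divr_gt0 => //; nra.
have Yp : 0 < Y by lra.
have XY : X / Y <= 2 * MP * MQ * modc (z - w) * (4 / q ^+ 2).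
  rewrite ler_pdivrMr //.
  have q2 : q ^+ 2 / 4 * (4 / q ^+ 2) = 1.
    by field; rewrite gt_eqF.
  have A0 : 0 <= 2 * MP * MQ * modc (z - w) by have := modc_ge0 (z - w); nra.
  have B0 : 0 <= 4 / q ^+ 2 by apply: divr_ge0 => //; nra.
  move: A0 B0 q2 XB; set A := 2 * MP * MQ * modc (z - w); set B := 4 / q ^+ 2; set E := q ^+ 2 / 4.
  move=> A0 B0 q2 XB.
  have : A * B * E <= A * B * Y by apply: ler_wpM2l => //; apply: mulr_ge0.
  have : A * B * E = A by rewrite -mulrA [B * E]mulrC q2 mulr1.
  lra.
rewrite /L; have := modc_ge0 h; have := modc_ge0 (z - w).
set D := modc (z - w); set H := modc h.
have : H * (X / Y) <= H * (2 * MP * MQ * D * (4 / q ^+ 2)) by apply: ler_wpM2l; rewrite ?modc_ge0.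
rewrite -mulrA; move=> a b c'. nra.
Qed.
End Lip.
Section Spec.
Variable R : realType.
Local Notation C := R[i].
Variable h : C.
Hypothesis Hh : modc (h - 1) < 1.

Definition pa : C := h * (h - 2).
Definition pb : C := h * (1 - h).
Definition pc : C := 2 * h.
Definition pd : C := - 2.
Definition pp : {poly C} := pa *: 'X^3 + pb *: 'X^2 + pc *: 'X + pd%:P.

Lemma pp_eval z : pp.[z] = pa * z ^+ 3 + pb * z ^+ 2 + pc * z + pd.
Proof. by rewrite /pp !hornerE. Qed.

Lemma pp'_eval z : pp^`().[z] = 3 * pa * z ^+ 2 + 2 * pb * z + pc.
Proof. rewrite /pp !derivE !hornerE /= /pa /pb /pc. ring. Qed.

Lemma h_ne0 : h != 0.
Proof. apply/eqP => e; move: Hh; rewrite e sub0r modcN. by rewrite (modc_nat _ 1); lra. Qed.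

Lemma h_ne2 : h - 2 != 0.
Proof. apply/eqP => e; move: Hh; have -> : h - 1 = (h - 2) + 1 by ring.
rewrite e add0r (modc_nat _ 1); lra. Qed.

Lemma pa_ne0 : pa != 0.
Proof. by rewrite /pa mulf_neq0 // ?h_ne0 ?h_ne2. Qed.

Lemma size_pp : size pp = 4%N.
Proof.
rewrite /pp -!addrA size_addl; first by rewrite size_scale ?pa_ne0 // size_polyXn.
rewrite size_scale ?pa_ne0 // size_polyXn.
apply: (leq_ltn_trans (size_add _ _)); rewrite gtn_max; apply/andP; split.
  by apply: (leq_ltn_trans (size_scale_leq _ _)); rewrite size_polyXn.
apply: (leq_ltn_trans (size_add _ _)); rewrite gtn_max; apply/andP; split.
  by apply: (leq_ltn_trans (size_scale_leq _ _)); rewrite size_polyX.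
by rewrite size_polyC; case: (_ != _).
Qed.
End Spec.
Section Spec2.
Variable R : realType.
Local Notation C := R[i].
Variable h : C.
Hypothesis Hh : modc (h - 1) < 1.

Lemma modc_frac (n d : nat) : modc (n%:R / d%:R : C) = n%:R / d%:R.
Proof. by rewrite modcM modcV !modc_nat. Qed.

Lemma g2_ne0 : h ^+ 3 - 12 * h ^+ 2 + 46 * h - 54 != 0.
Proof.
apply/eqP => e.
set t := h - 1.
have m0 := modc_ge0 t.
have Ht : modc t < 1 := Hh.
have E : (t - 5%:R / 4%:R) * (t ^+ 2 - 31%:R / 4%:R * t + 245%:R / 16%:R) = - (9%:R / 64%:R).
  have -> : - (9%:R / 64%:R) = - (9%:R / 64%:R) + (h ^+ 3 - 12 * h ^+ 2 + 46 * h - 54) by rewrite e addr0.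
  by rewrite /t; field.
have := congr1 (@modc R) E; rewrite modcN modc_frac modcM.
have l1 : 1 / 4 <= modc (t - 5%:R / 4%:R).
  have := modcBr (5%:R / 4%:R) t; rewrite [modc (_ - t)]modcB modc_frac; lra.
have l2 : 105 / 16 <= modc (t ^+ 2 - 31%:R / 4%:R * t + 245%:R / 16%:R).
  have f1 := modcDr (245%:R / 16%:R : C) (t ^+ 2 - 31%:R / 4%:R * t).
  rewrite [_%:R / 16%:R + _]addrC in f1.
  have f2 := modcD (t ^+ 2) (- (31%:R / 4%:R * t)).
  have f3 : modc (- (31%:R / 4%:R * t)) = 31%:R / 4%:R * modc t by rewrite modcN modcM modc_frac.
  have f4 : modc (t ^+ 2) = modc t ^+ 2 by rewrite modcX.
  have f5 : modc (245%:R / 16%:R : C) = 245%:R / 16%:R by rewrite modc_frac.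
  have : modc t ^+ 2 <= 1 by rewrite expr2; nra.
  rewrite f3 f4 in f2; rewrite f5 in f1.
  lra.
move=> eq; have : 1 / 4 * (105 / 16) <= 9%:R / 64%:R :> R.
  rewrite -eq; apply: ler_pM => //; lra.
lra.
Qed.

Lemma generic_pp : generic_poly (pp h).
Proof.
move=> z; rewrite /root pp_eval => /eqP E1; apply/negP; rewrite pp'_eval => /eqP E2.
move: E1 E2; rewrite /pa /pb /pc /pd => E1 E2.
set A1 := 312 * h - 504 * h ^+ 2 + 294 * h ^+ 3 - 72 * h ^+ 4 + 6 * h ^+ 5.
set A0 := 432 - 776 * h + 592 * h ^+ 2 - 240 * h ^+ 3 + 50 * h ^+ 4 - 4 * h ^+ 5.
set B2 := - 104 * h + 168 * h ^+ 2 - 98 * h ^+ 3 + 24 * h ^+ 4 - 2 * h ^+ 5.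
set B1 := - 144 + 276 * h - 234 * h ^+ 2 + 106 * h ^+ 3 - 24 * h ^+ 4 + 2 * h ^+ 5.
set B0 := 24 + 20 * h - 44 * h ^+ 2 + 18 * h ^+ 3 - 2 * h ^+ 4.
have key : (A1 * z + A0) * (h * (h - 2) * z ^+ 3 + h * (1 - h) * z ^+ 2 + 2 * h * z + - 2)
   + (B2 * z ^+ 2 + B1 * z + B0) * (3 * (h * (h - 2)) * z ^+ 2 + 2 * (h * (1 - h)) * z + 2 * h)
   = 4 * (h - 2) ^+ 2 * (h ^+ 3 - 12 * h ^+ 2 + 46 * h - 54).
  rewrite /A1 /A0 /B2 /B1 /B0; ring.
have nz : 4 * (h - 2) ^+ 2 * (h ^+ 3 - 12 * h ^+ 2 + 46 * h - 54) != 0.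
  rewrite mulf_neq0 ?g2_ne0 // mulf_neq0 ?expf_neq0 ?(h_ne2 Hh) //.
  by rewrite pnatr_eq0.
move: key; rewrite E1 E2 !mulr0 addr0 => e.
by move: nz; rewrite -e eqxx.
Qed.
End Spec2.
Section Spec3.
Variable R : realType.
Local Notation C := R[i].
Variable h : C.
Hypothesis Hh : modc (h - 1) < 1.

Lemma not_unicritical : ~ unicritical (pp h).
Proof.
move=> [c0 [al [be [n [c0n E]]]]].
have hs := size_pp Hh.
have n3 : n = 3%N.
  move: hs; rewrite E size_scale //.
  case: n E => [|k] E.
    rewrite expr0 -polyCD size_polyC; by case: (_ != _).
  have sl : (size (be%:P) < size (('X - al%:P) ^+ k.+1))%N.
    by rewrite size_exp_XsubC size_polyC; case: (_ != _).
  by rewrite size_polyDl // size_exp_XsubC; case=> ->.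
subst n.
have D z : (pp h)^`().[z] = c0 * (3 * (z - al) ^+ 2).
  rewrite E derivZ derivD derivC addr0 deriv_exp derivXsubC mul1r !hornerE /=.
  ring.
have e0 := D al; have e1 := D (al + 1); have e2 := D (al - 1).
rewrite !pp'_eval in e0 e1 e2.
rewrite subrr expr0n /= !mulr0 in e0.
have F : pb h = - 3 * pa h * al.
  have : 3 * pa h * (al + 1) ^+ 2 + 2 * pb h * (al + 1) + pc h
       - (3 * pa h * (al - 1) ^+ 2 + 2 * pb h * (al - 1) + pc h) = 0.
    by rewrite e1 e2; ring.
  move=> H; have : 4 * (pb h + 3 * pa h * al) = 0.
    by rewrite -H; ring.
  move/eqP; rewrite mulf_eq0 pnatr_eq0 /= addr_eq0 => /eqP ->; ring.
have G : pc h = 3 * pa h * al ^+ 2.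
  move: e0; rewrite F => e0.
  have : pc h - 3 * pa h * al ^+ 2 = 0 by rewrite -e0; ring.
  by move/eqP; rewrite subr_eq0 => /eqP.
have K : pb h ^+ 2 = 3 * pa h * pc h by rewrite F G; ring.
move: K; rewrite /pa /pb /pc => K.
have K2 : h ^+ 2 * ((h - 1 - 3) ^+ 2 - 3) = 0.
  have : h ^+ 2 * ((h - 1 - 3) ^+ 2 - 3) = (h * (1 - h)) ^+ 2 - 3 * (h * (h - 2)) * (2 * h) by ring.
  by rewrite K subrr.
move: K2 => /eqP; rewrite mulf_eq0 expf_eq0 (negbTE (h_ne0 Hh)) andbF /= subr_eq0 => /eqP K2.
have := congr1 (@modc R) K2; rewrite modcX (modc_nat _ 3).
set t := h - 1.
have Ht : modc t < 1 := Hh.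
have := modcBr 3%:R t; rewrite [modc (_ - t)]modcB (modc_nat _ 3) => f1 f2.
have m0 := modc_ge0 (t - 3).
have : 2 * 2 < modc (t - 3) ^+ 2 by rewrite expr2; nra.
rewrite f2; lra.
Qed.
End Spec3.
Lemma min3 (R : realType) (a b c : R) : 0 < a -> 0 < b -> 0 < c ->
  exists e : R, [/\ 0 < e, e <= a, e <= b & e <= c].
Proof.
move=> a0 b0 c0; exists (Order.min a (Order.min b c)); split.
- by rewrite !lt_min a0 b0 c0.
- by rewrite ge_min lexx.
- by rewrite ge_min ge_min lexx orbT.
- by rewrite ge_min ge_min lexx !orbT.
Qed.

Section Dyn2.
Variable R : realType.
Local Notation C := R[i].
Variable h : C.
Hypothesis Hh : modc (h - 1) < 1.

Local Notation f := (relaxed_newton h (pp h)).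
Definition Nf (z : C) : C := z - h * (pp h).[z] / (pp h)^`().[z].

Lemma f_some z : (pp h)^`().[z] != 0 -> f (Some z) = Some (Nf z).
Proof. by move=> nz; rewrite /relaxed_newton (negbTE nz). Qed.

Lemma Q0 : (pp h)^`().[0] != 0.
Proof.
rewrite pp'_eval expr0n /= !mulr0 !add0r /pc mulf_neq0 ?(h_ne0 Hh) //.
by rewrite pnatr_eq0.
Qed.

Lemma Q1 : (pp h)^`().[1] != 0.
Proof.
have -> : (pp h)^`().[1] = h * (h - 2) by rewrite pp'_eval /pa /pb /pc expr1n; ring.
by rewrite mulf_neq0 ?(h_ne0 Hh) ?(h_ne2 Hh).
Qed.

Lemma Nf0 : Nf 0 = 1.
Proof.
rewrite /Nf pp_eval pp'_eval expr0n /= !mulr0 !add0r /pd /pc.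
by field; rewrite (h_ne0 Hh).
Qed.

Lemma Nf1 : Nf 1 = 0.
Proof.
have := Q1; rewrite /Nf pp_eval pp'_eval !expr1n /pa /pb /pc /pd => nz.
field; by move: nz; rewrite !mulr1.
Qed.

Lemma Nf_sub1 z : (pp h)^`().[z] != 0 ->
  Nf z - 1 = z ^+ 2 * ((3 - h) * pa h * z + (2 - h) * pb h - 3 * pa h) / (pp h)^`().[z].
Proof.
move=> nz; rewrite /Nf.
have E : z * (pp h)^`().[z] - h * (pp h).[z] - (pp h)^`().[z]
   = z ^+ 2 * ((3 - h) * pa h * z + (2 - h) * pb h - 3 * pa h).
  by rewrite pp_eval pp'_eval /pa /pb /pc /pd; ring.
rewrite -E; field; exact: nz.
Qed.

Lemma not_basin : ~ exists2 z0 : C, root (pp h) z0 & basin f (Some z0) (Some 0).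
Proof.
move=> [z0 rz0 B].
have z00 : z0 != 0.
  apply/eqP => e; move: rz0; rewrite e /root pp_eval expr0n /= !mulr0 !add0r /pd.
  by rewrite expr0n /= mulr0 !add0r oppr_eq0 pnatr_eq0.
have ch0 : 0 < chordal (Some 0) (Some z0).
  rewrite /=; apply: divr_gt0.
    apply: mulr_gt0 => //; apply: modc_gt0; by rewrite sub0r oppr_eq0.
  apply: mulr_gt0; apply: (lt_le_trans ltr01); exact: sq1_ge1.
have [K HK] := B _ ch0.
have it : forall k, iter k.*2 f (Some 0) = Some 0.
  elim=> [|k IH] //; rewrite doubleS !iterS IH f_some ?Q0 // Nf0 f_some ?Q1 // Nf1 //.
have := HK K.*2; rewrite -addnn leq_addr addnn it => /(_ isT); by rewrite ltxx.
Qed.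

End Dyn2.
Section Orbit.
Variable R : realType.
Local Notation C := R[i].
Variable h : C.
Local Notation f := (relaxed_newton h (pp h)).
Local Notation Q := ((pp h)^`()).
Variables r0 r1 L0 L1 K rho : R.
Hypothesis Nf1' : Nf h 1 = 0.
Hypothesis H0 : forall z w : C, modc z <= r0 -> modc w <= r0 ->
  Q.[z] != 0 /\ modc (Nf h z - Nf h w) <= L0 * modc (z - w).
Hypothesis H1 : forall z w : C, modc (z - 1) <= r1 -> modc (w - 1) <= r1 ->
  Q.[z] != 0 /\ modc (Nf h z - Nf h w) <= L1 * modc (z - w).
Hypothesis HK : forall z : C, modc z <= r0 -> modc (Nf h z - 1) <= K * modc z ^+ 2.
Hypothesis K0 : 0 <= K.
Hypothesis L00 : 0 <= L0.
Hypothesis L10 : 0 <= L1.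
Hypothesis rho0 : 0 < rho.
Hypothesis rr0 : rho <= r0.
Hypothesis rr1 : rho <= r1.
Hypothesis Krho : K * rho <= 1 / 2.
Hypothesis LKrho : (L0 + L1 + 1) * K * rho <= 1 / 2.
Hypothesis rho_le : rho <= 1 / 2.

Local Notation L := (L0 + L1 + 1).
Ltac loc := have K0' := K0; have L00' := L00; have L10' := L10; have rho0' := rho0;
  have rr0' := rr0; have rr1' := rr1; have Krho' := Krho; have LKrho' := LKrho;
  have rho_le' := rho_le.
Definition Bd (n : nat) : R := rho / 2 ^+ n./2.

Lemma Bd_gt0 n : 0 < Bd n.
Proof. by rewrite /Bd divr_gt0 // exprn_gt0. Qed.

Lemma Bd_le n : Bd n <= rho.
Proof.
loc.
rewrite /Bd ler_pdivrMr ?exprn_gt0 //.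
rewrite -[X in X <= _]mulr1; apply: ler_wpM2l; first exact: ltW.
by rewrite exprn_ege1 // ler1n.
Qed.

Lemma BdS n : Bd n.+1 = if odd n then Bd n / 2 else Bd n.
Proof.
loc.
rewrite /Bd; have : n.+1./2 = (odd n + n./2)%N by rewrite -uphalf_half.
case: (odd n) => /= ->; last by [].
rewrite add1n exprS; field; rewrite ?expf_neq0 ?pnatr_eq0 //.
Qed.

Lemma inv n : forall z : C, modc z <= rho ->
  iter n f (Some z) = Some (iter n (Nf h) z) /\
  (if odd n then modc (iter n (Nf h) z - 1) <= K * Bd n ^+ 2
   else modc (iter n (Nf h) z) <= Bd n).
Proof.
loc.
move=> z hz; elim: n => [|n [IHe IHb]].
  by rewrite /= /Bd /= expr0 divr1.
rewrite !iterS IHe BdS /=.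
set y := iter n (Nf h) z in IHb *.
have Bn0 := Bd_gt0 n; have Bnr := Bd_le n.
have KB : K * Bd n <= 1 / 2 by apply: le_trans Krho; apply: ler_wpM2l.
have KB2 : K * Bd n ^+ 2 <= 1 / 2 * Bd n.
  by rewrite expr2 mulrA; apply: ler_wpM2r => //; exact: ltW.
case: (odd n) IHb => /= hb.
- have Kb : K * Bd n ^+ 2 <= Bd n by lra.
  have hy : modc (y - 1) <= r1 by lra.
  have [nz Hl] := @H1 y 1 hy ltac:(rewrite subrr (modc_nat _ 0); lra).
  rewrite Nf1' subr0 in Hl; rewrite (negbTE nz); split => //.
  have my := modc_ge0 (y - 1).
  have a : L1 * modc (y - 1) <= L * (K * Bd n ^+ 2) by apply: ler_pM => //; lra.
  have b : L * K * Bd n <= 1 / 2.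
    apply: le_trans LKrho; apply: ler_wpM2l => //; apply: mulr_ge0 => //; lra.
  have c : L * (K * Bd n ^+ 2) <= 1 / 2 * Bd n.
    have -> : L * (K * Bd n ^+ 2) = (L * K * Bd n) * Bd n by rewrite expr2; ring.
    by apply: ler_wpM2r => //; exact: ltW.
  lra.
- have hy : modc y <= r0 by lra.
  have [nz _] := @H0 y y hy hy.
  rewrite (negbTE nz); split => //.
  apply: le_trans (HK hy) _; apply: ler_wpM2l => //.
  rewrite !expr2; apply: ler_pM => //; exact: modc_ge0.
Qed.

Lemma near_c n (z : C) : modc z <= rho ->
  modc (iter n (Nf h) z - (if odd n then 1 else 0)) <= Bd n.
Proof.
loc.
move=> hz; have [_ H] := inv n hz.
have Bn0 := Bd_gt0 n; have Bnr := Bd_le n.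
case: (odd n) H => H; last by rewrite subr0.
apply: le_trans H _; rewrite expr2; nra.
Qed.

Lemma lip_chain n (z w : C) : modc z <= rho -> modc w <= rho ->
  modc (iter n (Nf h) z - iter n (Nf h) w) <= L ^+ n * modc (z - w).
Proof.
loc.
move=> hz hw; elim: n => [|n IH]; first by rewrite /= expr0 mul1r.
rewrite !iterS.
have cz := near_c n hz; have cw := near_c n hw.
have Bnr := Bd_le n.
have md := modc_ge0 (iter n (Nf h) z - iter n (Nf h) w).
have Lp : 0 <= L ^+ n by apply: exprn_ge0; lra.
case: (odd n) cz cw => cz cw.
- have [_ Hl] := @H1 (iter n (Nf h) z) (iter n (Nf h) w) ltac:(lra) ltac:(lra).
  apply: le_trans Hl _; rewrite exprSr -mulrA [L * _]mulrC mulrA.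
  have : L1 * modc (iter n (Nf h) z - iter n (Nf h) w) <= L * (L ^+ n * modc (z - w)).
    apply: ler_pM => //; lra.
  by rewrite [L * _]mulrC.
- rewrite !subr0 in cz cw.
  have [_ Hl] := @H0 (iter n (Nf h) z) (iter n (Nf h) w) ltac:(lra) ltac:(lra).
  apply: le_trans Hl _; rewrite exprSr -mulrA [L * _]mulrC mulrA.
  have : L0 * modc (iter n (Nf h) z - iter n (Nf h) w) <= L * (L ^+ n * modc (z - w)).
    apply: ler_pM => //; lra.
  by rewrite [L * _]mulrC.
Qed.

Lemma equi (v : C) : modc v <= rho / 2 -> equicontinuous_iterates_at f (Some v).
Proof.
loc.
move=> hv eps eps0.
set k0 := Num.Def.archi_bound (4 * rho / eps).
set N0 := k0.*2.
have L1' : 1 <= L by lra.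
have LN : 0 < L ^+ N0 by apply: exprn_gt0; lra.
have [d [d0 d1 d2 d3]] := min3 (a := 1 / 3) (b := rho / 6) (c := eps / (8 * L ^+ N0))
   ltac:(lra) ltac:(lra) ltac:(apply: divr_gt0 => //; lra).
exists d => // u n hu.
have hv1 : modc v <= 1 by lra.
have [w eu hw] := chordal_near hv1 (lt_le_trans hu d1); subst u.
have hvr : modc v <= rho by lra.
have hwr : modc w <= rho.
  have := modcD v (w - v); have -> : v + (w - v) = w by ring.
  rewrite [modc (w - v)]modcB; lra.
have [E1 _] := inv n hvr; have [E2 _] := inv n hwr.
rewrite E1 E2; apply: le_lt_trans (chordal_le _ _) _.
have ch0 := chordal_ge0 (Some v) (Some w).
case: (leqP N0 n) => hn.
- have cz := near_c n hvr; have cw := near_c n hwr.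
  have tri := modcD (iter n (Nf h) v - (if odd n then 1 else 0))
                    ((if odd n then 1 else 0) - iter n (Nf h) w).
  rewrite addrA subrK in tri.
  rewrite [modc ((if odd n then 1 else 0) - _)]modcB in tri.
  have Bsmall : Bd n < eps / 4.
    have hk : (k0 <= n./2)%N.
      by rewrite -(half_double k0); apply: half_leq.
    have H := upper_nthrootP hk.
    rewrite ltr_pdivrMr // in H.
    have P0 : 0 < (2 : R) ^+ n./2 by apply: exprn_gt0.
    rewrite /Bd ltr_pdivrMr //.
    move: H P0; set P := (2 : R) ^+ n./2 => H P0.
    lra.
  lra.
- have := lip_chain n hvr hwr.
  have Ln : L ^+ n <= L ^+ N0 by apply: ler_weXn2l => //; exact: ltnW.
  have mvw := modc_ge0 (v - w).
  have : L ^+ n * modc (v - w) <= L ^+ N0 * (3 * d).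
    apply: ler_pM => //; [apply: exprn_ge0; lra | lra].
  have : L ^+ N0 * d <= eps / 8.
    rewrite -ler_pdivlMl //; apply: le_trans d3 _.
    have LN0 : L ^+ N0 != 0 by rewrite gt_eqF.
    rewrite le_eqVlt; apply/orP; left; apply/eqP.
    by field.
  lra.
Qed.

Lemma fatou0 : fatou_set f (Some 0).
Proof.
loc.
have [r [r0' r1' r2' _]] := min3 (a := 1 / 3) (b := rho / 6) (c := 1)
   ltac:(lra) ltac:(lra) ltac:(lra).
exists r => // u hu.
have h0 : modc (0 : C) <= 1 by rewrite (modc_nat _ 0); lra.
have [v eu hv] := chordal_near h0 (lt_le_trans hu r1'); subst u.
apply: equi; rewrite sub0r modcN in hv; lra.
Qed.
End Orbit.
Lemma choose_rho (R : realType) (L K r0 r1 : R) : 0 <= L -> 0 <= K -> 0 < r0 -> 0 < r1 ->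
  exists rho : R, [/\ 0 < rho, rho <= r0, rho <= r1, K * rho <= 1 / 2 &
     L * K * rho <= 1 / 2 /\ rho <= 1 / 2].
Proof.
move=> L0 K0 r00 r10.
set D := 2 * ((L + 1) * (K + 1)).
have D2 : 2 <= D by rewrite /D; nra.
have [rho [p1 p2 p3 p4]] := min3 (a := r0) (b := r1) (c := 1 / D) r00 r10
   ltac:(apply: divr_gt0 => //; lra).
have rD : rho * D <= 1 by rewrite -ler_pdivlMr //; lra.
exists rho; split => //.
- have : 2 * K <= D by rewrite /D; nra.
  move=> a; have : 2 * K * rho <= D * rho by apply: ler_wpM2r => //; lra.
  lra.
- split; last by nra.
  have : 2 * (L * K) <= D by rewrite /D; nra.
  move=> a; have : 2 * (L * K) * rho <= D * rho by apply: ler_wpM2r => //; lra.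
  lra.
Qed.

Lemma fatou_pp (R : realType) (h : R[i]) (Hh : modc (h - 1) < 1) :
  fatou_set (relaxed_newton h (pp h)) (Some 0).
Proof.
have [r0 [L0 [r00 L00 G0]]] := newton_lip h (pp h) (Q0 Hh).
have [r1 [L1 [r10 L10 G1]]] := newton_lip h (pp h) (Q1 Hh).
set q0 := modc (pp h)^`().[0] in G0.
have q00 : 0 < q0 by apply: modc_gt0; exact: Q0.
have H0 : forall z w : R[i], modc z <= r0 -> modc w <= r0 ->
    (pp h)^`().[z] != 0 /\ modc (Nf h z - Nf h w) <= L0 * modc (z - w).
  move=> z w hz hw; have [a _ c] := G0 z w ltac:(by rewrite subr0) ltac:(by rewrite subr0).
  by split.
have H1 : forall z w : R[i], modc (z - 1) <= r1 -> modc (w - 1) <= r1 ->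
    (pp h)^`().[z] != 0 /\ modc (Nf h z - Nf h w) <= L1 * modc (z - w).
  move=> z w hz hw; have [a _ c] := G1 z w hz hw.
  by split.
set A := modc ((3 - h) * pa h).
set B := modc ((2 - h) * pb h).
set E := modc (3 * pa h).
set Ms := A * r0 + B + E.
have A0 : 0 <= A by exact: modc_ge0.
have B0 : 0 <= B by exact: modc_ge0.
have E0 : 0 <= E by exact: modc_ge0.
have Ms0 : 0 <= Ms by rewrite /Ms; nra.
set K := Ms * 2 / q0.
have K0 : 0 <= K by rewrite /K; apply: divr_ge0 => //; lra.
have HK : forall z : R[i], modc z <= r0 -> modc (Nf h z - 1) <= K * modc z ^+ 2.
  move=> z hz.
  have [nz low _] := G0 z z ltac:(by rewrite subr0) ltac:(by rewrite subr0).
  rewrite (Nf_sub1 nz) modcM modcM modcV modcX.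
  set S := modc (_ + _ - _).
  have mz := modc_ge0 z.
  have SB : S <= Ms.
    rewrite /S; apply: le_trans (modcD _ _) _; rewrite modcN.
    apply: le_trans (lerD (modcD _ _) (lexx _)) _.
    rewrite [modc ((3 - h) * pa h * z)]modcM -/A -/B -/E.
    have : A * modc z <= A * r0 by apply: ler_wpM2l.
    rewrite /Ms; lra.
  set Y := modc (pp h)^`().[z] in low *.
  have Yp : 0 < Y by lra.
  have S0 : 0 <= S by exact: modc_ge0.
  have SY : S / Y <= K.
    rewrite ler_pdivrMr // /K.
    have e : Ms * 2 / q0 * (q0 / 2) = Ms by field; rewrite gt_eqF.
    have : Ms * 2 / q0 * (q0 / 2) <= Ms * 2 / q0 * Y by apply: ler_wpM2l => //; rewrite -/K.
    lra.
  rewrite -mulrA [K * _]mulrC; apply: ler_wpM2l => //; exact: exprn_ge0.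
have [rho [p1 p2 p3 p4 [p5 p6]]] := choose_rho (L := L0 + L1 + 1) (K := K)
   ltac:(lra) K0 r00 r10.
exact: (@fatou0 R h r0 r1 L0 L1 K rho (Nf1 Hh) H0 H1 HK K0 L00 L10 p1 p2 p3 p4 p5 p6).
Qed.

Unset Implicit Arguments.
Local Close Scope complex_scope.
Local Open Scope ring_scope.

Theorem theoremB (R : realType) (h : R[i]) :
  `|h - 1| < 1 ->
  exists p : {poly R[i]},
    size p = 4%N /\ generic_poly p /\ ~ unicritical p /\
    ~ (forall u : sphere R,
         fatou_set (relaxed_newton h p) u <->
         exists2 z0 : R[i], root p z0 & basin (relaxed_newton h p) (Some z0) u).
Proof.
move=> H.
have Hh : modc (h - 1) < 1 by move: H; rewrite modcE -(rmorph1 (real_complex R)) ltcR.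
exists (pp h); split; first exact: size_pp.
split; first exact: generic_pp.
split; first exact: not_unicritical.
move=> all; apply: (not_basin Hh).
by apply/all; exact: fatou_pp.
Qed.
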